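(* Let $B$ be any group. Suppose $w\in (B\wr C_2)'$ is given by the wreath recursion $w=(r_1,\ r_1^{-1}[f,g])$ with $r_1,f,g\in B$. Put $a_{2,1}=(f^{-1})^{r_1^{-1}}$, $a_{2,2}=r_1a_{2,1}$, $a_{1,2}=g^{a_{2,2}^{-1}}$. Then $w=[(e,a_{1,2})\sigma,\ (a_{2,1},a_{2,2})]$.
   Context: $C_2=\langle\sigma\rangle$, $\sigma=(1,2)$ acting on $\{1,2\}$. Elements of $B\wr C_2=B^2\rtimes C_2$ are written $(b_1,b_2)\tau$, with multiplication $(g_1,g_2)\tau\cdot(h_1,h_2)\rho=(g_1h_{\tau(1)},g_2h_{\tau(2)})\tau\rho$; $(b_1,b_2)$ denotes an element with trivial $C_2$-part. Conventions: $[a,b]=aba^{-1}b^{-1}$ and $a^b=bab^{-1}$. *)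

(* Defs.v *)
Record is_group {B : Type} (mul : B -> B -> B) (inv : B -> B) (e : B) : Prop := {
  grp_assoc : forall x y z, mul x (mul y z) = mul (mul x y) z;
  grp_mul1l : forall x, mul e x = x;
  grp_mul1r : forall x, mul x e = x;
  grp_mulVl : forall x, mul (inv x) x = e;
  grp_mulVr : forall x, mul x (inv x) = e
}.

Section Ops.
Variables (T : Type) (mul : T -> T -> T) (inv : T -> T) (e : T).

Definition comm (a b : T) : T := mul (mul (mul a b) (inv a)) (inv b).
Definition conj (a b : T) : T := mul (mul b a) (inv b).

Inductive in_derived : T -> Prop :=
| der_one : in_derived e
| der_comm : forall a b, in_derived (comm a b)
| der_mul : forall x y, in_derived x -> in_derived y -> in_derived (mul x y)
| der_inv : forall x, in_derived x -> in_derived (inv x).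
End Ops.
Arguments in_derived {T} mul inv e _.
Arguments comm {T} mul inv a b.
Arguments conj {T} mul inv a b.

Section Wreath.
Variables (B : Type) (mul : B -> B -> B) (inv : B -> B) (e : B).

(* Elements of B wr C_2 = B^2 x| C_2 : (b1, b2, t), where t = true means sigma = (1,2)
   and t = false means the identity of C_2. *)
Definition wr : Type := (B * B * bool)%type.

(* (g1,g2)tau * (h1,h2)rho = (g1 h_{tau(1)}, g2 h_{tau(2)}) tau rho *)
Definition wmul (x y : wr) : wr :=
  match x, y with
  | (g1, g2, t), (h1, h2, r) =>
      (mul g1 (if t then h2 else h1), mul g2 (if t then h1 else h2), xorb t r)
  end.

Definition winv (x : wr) : wr :=
  match x with
  | (g1, g2, false) => (inv g1, inv g2, false)
  | (g1, g2, true) => (inv g2, inv g1, true)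
  end.

Definition wone : wr := (e, e, false).
End Wreath.
Arguments wmul {B} mul x y.
Arguments winv {B} inv x.
Arguments wone {B} e.

(* Main.v *)
Require Import Defs.

Section G.
Variables (B : Type) (mul : B -> B -> B) (inv : B -> B) (e : B).
Hypothesis HB : is_group mul inv e.

Lemma gA x y z : mul (mul x y) z = mul x (mul y z).
Proof. symmetry; apply (grp_assoc _ _ _ HB). Qed.
Lemma g1l x : mul e x = x. Proof. apply (grp_mul1l _ _ _ HB). Qed.
Lemma g1r x : mul x e = x. Proof. apply (grp_mul1r _ _ _ HB). Qed.
Lemma gVl x : mul (inv x) x = e. Proof. apply (grp_mulVl _ _ _ HB). Qed.
Lemma gVr x : mul x (inv x) = e. Proof. apply (grp_mulVr _ _ _ HB). Qed.
Lemma gKl x y : mul (inv x) (mul x y) = y.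
Proof. rewrite <- gA, gVl, g1l; reflexivity. Qed.
Lemma gKr x y : mul x (mul (inv x) y) = y.
Proof. rewrite <- gA, gVr, g1l; reflexivity. Qed.
Lemma ginv_uniq x y : mul x y = e -> inv x = y.
Proof. intro H. rewrite <- (g1r (inv x)), <- H, gKl. reflexivity. Qed.
Lemma ginvM x y : inv (mul x y) = mul (inv y) (inv x).
Proof. apply ginv_uniq. rewrite gA, gKr, gVr. reflexivity. Qed.
Lemma ginvK x : inv (inv x) = x.
Proof. apply ginv_uniq. apply gVl. Qed.
Lemma ginv1 : inv e = e.
Proof. apply ginv_uniq. apply g1l. Qed.
End G.

Theorem mainTheorem4 (B : Type) (mul : B -> B -> B) (inv : B -> B) (e : B)
  (HB : is_group mul inv e) (r1 f g : B) :
  let W := wr B in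
  let w : W := (r1, mul (inv r1) (comm mul inv f g), false) in
  in_derived (wmul mul) (winv inv) (wone e) w ->
  let a21 := conj mul inv (inv f) (inv r1) in
  let a22 := mul r1 a21 in
  let a12 := conj mul inv g (inv a22) in
  w = comm (wmul mul) (winv inv) ((e, a12, true) : W) ((a21, a22, false) : W).
Proof.
  intros W w _ a21 a22 a12.
  subst W w a12 a22 a21.
  unfold comm, conj, wmul, winv; simpl.
  repeat rewrite ?(ginvM _ _ _ _ HB), ?(ginvK _ _ _ _ HB), ?(ginv1 _ _ _ _ HB),
    ?(gA _ _ _ _ HB), ?(gKl _ _ _ _ HB), ?(gKr _ _ _ _ HB), ?(gVl _ _ _ _ HB),
    ?(gVr _ _ _ _ HB), ?(g1l _ _ _ _ HB), ?(g1r _ _ _ _ HB).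
  reflexivity.
Qed.
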